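(* Let $r\ge 0$ be fixed. There is a constant $C>0$ depending only on $r$ such that for every $n$ and every hypergraph $H\in\mathcal K_r(n)$, there exists a hypergraph $H'$ on $[n]$ with at most $C n^{r+1}$ hyperedges (i.e. $\mathcal O(n^{r+1})$) such that $H=\mathrm{cl}_r(H')$.
   Context: Hypergraphs on $V=[n]$ are identified with their hyperedge sets. $\mathcal K_r(n)$ is the class of hypergraphs $\mathcal E$ on $V$ satisfying: (R0) every $X\subseteq V$ with $|X|\le r$ is in $\mathcal E$; (R1) $A\in\mathcal E\Rightarrow V\setminus A\in\mathcal E$; (R2) $A,B\in\mathcal E$ and $|A\cap B|\ge r\Rightarrow A\cup B\in\mathcal E$. For a hypergraph $H$ on $V$, $\mathrm{cl}_r(H)$ is the intersection of all hypergraphs in $\mathcal K_r(n)$ containing $H$. *)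

(* Defs.v *)
From mathcomp Require Import all_boot.
Set Implicit Arguments. Unset Strict Implicit. Unset Printing Implicit Defensive.

(* The vertex set [n] is 'I_n; a hypergraph on [n] is identified with its set
   of hyperedges, i.e. an element of {set {set 'I_n}}. *)
Definition hypergraph (n : nat) := {set {set 'I_n}}.

(* Membership in K_r(n): conditions (R0), (R1), (R2). *)
Definition in_Kr (r n : nat) (E : hypergraph n) : bool :=
  [&& [forall X : {set 'I_n}, (#|X| <= r) ==> (X \in E)],
      [forall A : {set 'I_n}, (A \in E) ==> (~: A \in E)] &
      [forall A : {set 'I_n}, forall B : {set 'I_n},
         [&& A \in E, B \in E & r <= #|A :&: B|] ==> (A :|: B \in E)]].

Definition cl_r (r n : nat) (H : hypergraph n) : hypergraph n :=
  \bigcap_(E : hypergraph n | in_Kr r E && (H \subset E)) E.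

(* Main.v *)
Require Import Defs.
From mathcomp Require Import all_boot.
From mathcomp Require Import zify.
Set Implicit Arguments. Unset Strict Implicit. Unset Printing Implicit Defensive.

Lemma KrP r n (E : hypergraph n) : in_Kr r E ->
  [/\ forall X : {set 'I_n}, #|X| <= r -> X \in E,
      forall A, A \in E -> ~: A \in E &
      forall A B, A \in E -> B \in E -> r <= #|A :&: B| -> A :|: B \in E].
Proof.
case/and3P => /forallP h0 /forallP h1 /forallP h2; split.
- by move=> X hX; move/implyP: (h0 X); apply.
- by move=> A hA; move/implyP: (h1 A); apply.
- move=> A B hA hB hAB; move/forallP: (h2 A) => /(_ B) /implyP; apply.
  by apply/and3P; split.
Qed.

Definition Pm n (H : hypergraph n) (S : {set 'I_n}) : {set 'I_n} :=
  [arg min_(B < setT | (B \in H) && (S \subset B)) #|B|].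

Lemma PmP r n (H : hypergraph n) S : in_Kr r H ->
  [/\ Pm H S \in H, S \subset Pm H S &
      forall B, B \in H -> S \subset B -> #|Pm H S| <= #|B|].
Proof.
move=> /KrP [h0 h1 h2].
have hT : (setT : {set 'I_n}) \in H.
  by rewrite -setC0; apply: h1; apply: h0; rewrite cards0.
rewrite /Pm; case: arg_minnP => [|B /andP[hB hSB] hmin]; first by rewrite hT subsetT.
split=> // C hC hSC; apply: hmin; by rewrite hC.
Qed.

Lemma union_in r n (E : hypergraph n) (T I : {set 'I_n}) (F : 'I_n -> {set 'I_n}) :
  in_Kr r E -> #|T| = r -> (forall x, x \in I -> F x \in E /\ T \subset F x) ->
  T :|: \bigcup_(x in I) F x \in E.
Proof.
move=> KE hT hF; have [h0 h1 h2] := KrP KE.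
have : (\bigcup_(x in I) F x == set0) ||
       ((\bigcup_(x in I) F x \in E) && (T \subset \bigcup_(x in I) F x)).
  apply: (big_ind (fun X => (X == set0) || ((X \in E) && (T \subset X)))).
  - by rewrite eqxx.
  - move=> X Y /orP[/eqP->|/andP[XE TX]]; first by rewrite set0U.
    move=> /orP[/eqP->|/andP[YE TY]]; first by rewrite setU0 XE TX orbT.
    apply/orP; right; rewrite h2 //=.
      by apply: subset_trans TX (subsetUl _ _).
    by rewrite -hT; apply: subset_leq_card; rewrite subsetI TX TY.
  - by move=> x hx; case: (hF x hx) => a b; rewrite a b orbT.
case/orP => [/eqP->|/andP[UE TU]]; first by rewrite setU0; apply: h0; rewrite hT.
by rewrite (setUidPr TU).
Qed.

Lemma small_in r n (H E : hypergraph n) :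
  in_Kr r H -> in_Kr r E ->
  (forall S : {set 'I_n}, #|S| == r.+1 -> Pm H S \in E) ->
  forall A, A \in H -> #|A| * 2 <= n -> A \in E.
Proof.
move=> KH KE hP A hA hsz.
have [h0 h1 h2] := KrP KH.
have [e0 e1 e2] := KrP KE.
case: (leqP #|A| r) => hAr; first exact: e0.
have : 0 < #|[set B : {set 'I_n} | B \subset A & #|B| == r]|.
  by rewrite cards_draws bin_gt0 ltnW.
case/card_gt0P => T; rewrite inE => /andP[TA /eqP Tr].
have key : forall x, x \in A :\: T -> Pm H (x |: T) \subset A.
  move=> x /setDP[xA xT].
  have [PH SP Pmin] := PmP (x |: T) KH.
  move: PH SP Pmin; set P := Pm H (x |: T) => PH SP Pmin.
  apply/negPn/negP => nPA.
  have SA : x |: T \subset A by rewrite subUset sub1set xA TA.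
  have PA : #|P| <= #|A| := Pmin A hA SA.
  have SI : x |: T \subset A :&: P by rewrite subsetI SA SP.
  have IH : A :&: P \in H.
    rewrite -[A :&: P]setCK setCI; apply: (h1); apply: (h2); [exact: (h1) | exact: (h1) |].
    rewrite -setCU.
    have := cardsC (A :|: P); have := cardsUI A P; have := subset_leq_card SI.
    rewrite card_ord cardsU1 xT Tr; lia.
  have := Pmin _ IH SI => hle.
  have /eqP e : A :&: P == P by rewrite eqEcard subsetIr hle.
  by rewrite -e subsetIl in nPA.
have -> : A = T :|: \bigcup_(x in A :\: T) Pm H (x |: T).
  apply/eqP; rewrite eqEsubset; apply/andP; split.
  - apply/subsetP => y yA; case: (boolP (y \in T)) => yT; first by rewrite inE yT.
    rewrite inE; apply/orP; right; apply/bigcupP; exists y; first by rewrite inE yT yA.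
    have [_ SP _] := PmP (y |: T) KH; apply: (subsetP SP); exact: setU11.
  - rewrite subUset TA; apply/bigcupsP => x hx; exact: key.
apply: (union_in KE Tr) => x hx; split.
- apply: hP; move: hx; rewrite inE => /andP[xT _]; by rewrite cardsU1 xT Tr.
- have [_ SP _] := PmP (x |: T) KH; exact: subset_trans (subsetUr _ _) SP.
Qed.

Lemma expn_mono k m n : m <= n -> m ^ k <= n ^ k.
Proof. by move=> h; elim: k => // k IH; rewrite !expnS leq_mul. Qed.

Lemma binle n k : 'C(n, k) <= n ^ k.
Proof.
apply: (@leq_trans (n ^_ k)).
  by rewrite -bin_ffact leq_pmulr // fact_gt0.
elim: k n => [|k IH] n //; rewrite ffactnS expnS leq_mul //.
apply: leq_trans (IH _) _; apply: expn_mono; exact: leq_pred.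
Qed.

Theorem mainTheorem12 (r : nat) :
  exists C : nat, 0 < C /\
    forall (n : nat) (H : hypergraph n), in_Kr r H ->
      exists H' : hypergraph n, #|H'| <= C * n ^ r.+1 /\ H = cl_r r H'.
Proof.
exists 1; split => // n H KH.
pose H' := [set Pm H S | S in [set S : {set 'I_n} | #|S| == r.+1]].
exists H'; split.
- rewrite mul1n; apply: leq_trans (leq_imset_card _ _) _.
  by rewrite card_draws card_ord binle.
- apply/eqP; rewrite eqEsubset; apply/andP; split.
  + apply/subsetP => A hA; apply/bigcapP => E /andP[KE sub].
    have hP : forall S : {set 'I_n}, #|S| == r.+1 -> Pm H S \in E.
      move=> S hS; apply: (subsetP sub); apply/imsetP; exists S => //; by rewrite inE.
    have [h0 h1 h2] := KrP KH; have [e0 e1 e2] := KrP KE.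
    case: (leqP (#|A| * 2) n) => hs; first exact: (small_in KH KE hP hA hs).
    rewrite -[A]setCK; apply: (e1); apply: (small_in KH KE hP (h1 _ hA)).
    have := cardsC A; rewrite card_ord; lia.
  + apply: bigcap_inf; rewrite KH /=; apply/subsetP => B /imsetP[S _ ->].
    by have [] := PmP S KH.
Qed.
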